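(* Let $(V,o)$ be a normal surface singularity of degree $d\in\{2,3\}$ (i.e. $Z^2=-d$) with $p=p_f(V,o)>0$, where $Z$ is the fundamental cycle on the minimal resolution. Assume that $Z$ is essentially irreducible and $Z=Z_{min}$. Then $$p_a(V,o)=p_a\Big(\big(\big[\tfrac{p-1}{d}\big]+1\big)Z\Big)=\frac d2\Big(\frac{2p-2}{d}-\big[\tfrac{p-1}{d}\big]\Big)\Big(\big[\tfrac{p-1}{d}\big]+1\Big)+1.$$
   Context: $[a]=\max\{n\in\mathbb Z\mid n\le a\}$. Let $\pi\colon X\to V$ be the minimal resolution and $\pi^{-1}(o)=\bigcup_{i=1}^nE_i$ the irreducible components of the exceptional set. A cycle is $D=\sum d_iE_i$, $d_i\in\mathbb Z$; $D_1\le D_2$ is coefficientwise. $K$ is the canonical divisor of $X$; $p_a(D)=1+\frac12(D^2+D\cdot K)$ for $D>0$. The fundamental cycle $Z$ is the smallest cycle $D>0$ with support $\pi^{-1}(o)$ and $D\cdot E_i\le0$ for all $i$; $p_f(V,o)=p_a(Z)$; the degree is $-Z^2$; $p_a(V,o)=\max\{p_a(D)\mid D>0\text{ a cycle}\}$. $Z_{min}$ is the unique minimal cycle $0<Z_{min}\le Z$ with $p_a(Z_{min})=p_a(Z)$. A $(-2)$-curve is a smooth rational exceptional curve $E$ with $E^2=-2$. $Z$ is essentially irreducible if there is a component $A\le Z$ which is not a $(-2)$-curve such that, with $k$ the coefficient of $A$ in $Z$, either $Z=kA$ or all components of $Z-kA$ are $(-2)$-curves. *)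

(* Defs.v *)
(* Combinatorial model of the exceptional set of the minimal
   resolution of a normal surface singularity: n components E_0..E_{n-1},
   intersection matrix M (M i j = E_i . E_j) and arithmetic genera g i = p_a(E_i). *)
From HB Require Import structures.
From mathcomp Require Import all_boot all_order all_algebra.
Set Implicit Arguments. Unset Strict Implicit. Unset Printing Implicit Defensive.
Import Order.TTheory GRing.Theory Num.Theory.
Local Open Scope ring_scope.

(* cycles D = sum d_i E_i *)
Definition cyc (n : nat) := {ffun 'I_n -> int}.

Definition inter n (M : 'M[int]_n) (D1 D2 : cyc n) : int :=
  \sum_(i < n) \sum_(j < n) D1 i * M i j * D2 j.

(* K . E_i by adjunction: 2 p_a(E_i) - 2 = E_i^2 + K.E_i *)
Definition KE n (M : 'M[int]_n) (g : 'I_n -> nat) (i : 'I_n) : int :=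
  2 * (g i)%:Z - 2 - M i i.

Definition Kdot n (M : 'M[int]_n) (g : 'I_n -> nat) (D : cyc n) : int :=
  \sum_(i < n) D i * KE M g i.

Definition pa n (M : 'M[int]_n) (g : 'I_n -> nat) (D : cyc n) : rat :=
  1 + ((inter M D D + Kdot M g D)%:~R) / 2.

Definition cyc_le n (D1 D2 : cyc n) : Prop := forall i, D1 i <= D2 i.
Definition cyc_pos n (D : cyc n) : Prop := cyc_le 0 D /\ D <> 0.

Definition scale_cyc n (k : int) (D : cyc n) : cyc n := [ffun i => k * D i].
Definition ecyc n (a : 'I_n) : cyc n := [ffun i => (i == a)%:Z].

Definition resolution_data n (M : 'M[int]_n) (g : 'I_n -> nat) : Prop :=
  (0 < n)%N /\
  [/\ M^T = M,
      (forall i j, i != j -> 0 <= M i j),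
      (forall D : cyc n, D <> 0 -> inter M D D < 0),
      (forall i j, connect [rel a b | (a != b) && (0 < M a b)] i j)
    & (forall i, ~ (g i = 0%N /\ M i i = -1))].                (* minimal: no (-1)-curves *)

Definition fundamental_cycle n (M : 'M[int]_n) (Z : cyc n) : Prop :=
  let good (D : cyc n) := (forall i, 0 < D i) /\ (forall i, inter M D (ecyc i) <= 0) in
  good Z /\ forall D, good D -> cyc_le Z D.

Definition minus2_curve n (M : 'M[int]_n) (g : 'I_n -> nat) (i : 'I_n) : Prop :=
  g i = 0%N /\ M i i = -2.

Definition essentially_irreducible n (M : 'M[int]_n) (g : 'I_n -> nat) (Z : cyc n) : Prop :=
  exists a : 'I_n, ~ minus2_curve M g a /\
    (Z = scale_cyc (Z a) (ecyc a) \/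
     forall j, (Z j - Z a * (ecyc a) j != 0) -> minus2_curve M g j).

Definition Z_is_Zmin n (M : 'M[int]_n) (g : 'I_n -> nat) (Z : cyc n) : Prop :=
  forall D : cyc n, cyc_pos D -> cyc_le D Z -> pa M g D = pa M g Z -> D = Z.

(* q is the arithmetic genus p_a(V,o) = max { p_a(D) | D > 0 } *)
Definition is_sing_pa n (M : 'M[int]_n) (g : 'I_n -> nat) (q : rat) : Prop :=
  (exists D : cyc n, cyc_pos D /\ pa M g D = q) /\
  (forall D : cyc n, cyc_pos D -> pa M g D <= q).

(* Main.v *)
Require Import Defs.
From HB Require Import structures.
From mathcomp Require Import all_boot all_order all_algebra.
From mathcomp Require Import ring lra zify.
Import Order.TTheory GRing.Theory Num.Theory.
Local Open Scope ring_scope.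

Section H.
Variables (n : nat) (M : 'M[int]_n) (g : 'I_n -> nat).

Lemma inter_linl (x y : int) (X Y E : cyc n) :
  inter M [ffun i => x * X i + y * Y i] E = x * inter M X E + y * inter M Y E.
Proof.
rewrite /inter !mulr_sumr -big_split; apply eq_bigr => i _.
rewrite !mulr_sumr -big_split; apply eq_bigr => j _; rewrite ffunE /=; ring.
Qed.

Lemma inter_linr (x y : int) (X Y E : cyc n) :
  inter M E [ffun i => x * X i + y * Y i] = x * inter M E X + y * inter M E Y.
Proof.
rewrite /inter !mulr_sumr -big_split; apply eq_bigr => i _.
rewrite !mulr_sumr -big_split; apply eq_bigr => j _; rewrite ffunE /=; ring.
Qed.

Lemma Kdot_lin (x y : int) (X Y : cyc n) :
  Kdot M g [ffun i => x * X i + y * Y i] = x * Kdot M g X + y * Kdot M g Y.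
Proof.
rewrite /Kdot !mulr_sumr -big_split; apply eq_bigr => i _; rewrite ffunE /=; ring.
Qed.

Lemma inter_ecycr (D : cyc n) j : inter M D (ecyc j) = \sum_i D i * M i j.
Proof.
apply eq_bigr => i _; rewrite (bigD1 j) //= big1 ?addr0 ?ffunE ?eqxx ?mulr1 //.
by move=> l /negbTE hl; rewrite ffunE hl mulr0.
Qed.

Lemma inter_ecycl (D : cyc n) j : inter M (ecyc j) D = \sum_i M j i * D i.
Proof.
rewrite /inter (bigD1 j) //= [X in _ + X]big1 ?addr0.
  by apply eq_bigr => i _; rewrite ffunE eqxx mul1r.
by move=> l /negbTE hl; apply big1 => i _; rewrite ffunE hl !mul0r.
Qed.

Lemma inter_ee i j : inter M (ecyc i) (ecyc j) = M i j.
Proof.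
rewrite inter_ecycr (bigD1 i) //= big1 ?addr0 ?ffunE ?eqxx ?mul1r //.
by move=> l /negbTE hl; rewrite ffunE hl mul0r.
Qed.

Lemma Kdot_e j : Kdot M g (ecyc j) = KE M g j.
Proof.
rewrite /Kdot (bigD1 j) //= big1 ?addr0 ?ffunE ?eqxx ?mul1r //.
by move=> l /negbTE hl; rewrite ffunE hl mul0r.
Qed.

Lemma inter_expand (D E : cyc n) : inter M D E = \sum_j E j * inter M D (ecyc j).
Proof.
under [RHS]eq_bigr => j _ do rewrite inter_ecycr mulr_sumr.
rewrite /inter exchange_big /=; apply eq_bigr => j _; apply eq_bigr => i _; ring.
Qed.

Lemma inter_sym (D E : cyc n) : M^T = M -> inter M D E = inter M E D.
Proof.
move=> hs; rewrite /inter exchange_big /=; apply eq_bigr => i _; apply eq_bigr => j _.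
have -> : M j i = M^T i j by rewrite mxE.
rewrite hs; ring.
Qed.

Lemma inter_quad (x y : int) (X Y : cyc n) : M^T = M ->
  inter M [ffun i => x * X i + y * Y i] [ffun i => x * X i + y * Y i] =
  x * x * inter M X X + 2 * x * y * inter M X Y + y * y * inter M Y Y.
Proof.
move=> hs; rewrite inter_linl !inter_linr (inter_sym Y X hs); move: (inter M X X) (inter M X Y) (inter M Y Y) => a b c; ring.
Qed.

Lemma even_mm1 (z : int) : (2 %| z * (z - 1))%Z.
Proof.
have hz := divz_eq z 2.
have : (z %% 2 = 0 \/ z %% 2 = 1)%Z.
  have h1 := modz_ge0 z (isT : (2:int) != 0); have h2 := ltz_pmod z (isT : (0 < (2:int))).
  lia.
move: hz; set q := (z %/ 2)%Z; set r := (z %% 2)%Z => hz.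
case=> hr; rewrite hz hr; apply/dvdzP.
  by exists (q * (q * 2 - 1)); ring.
by exists (q * (q * 2 + 1)); ring.
Qed.

Lemma dvdzD' (d a b : int) : (d %| a)%Z -> (d %| b)%Z -> (d %| a + b)%Z.
Proof. by move=> ha hb; apply: rpredD. Qed.

Lemma parity (D : cyc n) : M^T = M -> (2 %| inter M D D + Kdot M g D)%Z.
Proof.
move=> hs.
have xs : forall i j, D i * M i j * D j = D j * M j i * D i.
  move=> i j; have -> : M j i = M^T i j by rewrite mxE.
  rewrite hs; ring.
set U := \sum_(i < n) \sum_(j < n) (if (i < j)%N then D i * M i j * D j else 0).
have hL : \sum_(i < n) \sum_(j < n) (if (j < i)%N then D i * M i j * D j else 0) = U.
  rewrite exchange_big /=; apply eq_bigr => i _; apply eq_bigr => j _.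
  by case: ifP => // _; rewrite xs.
have hI : inter M D D = U + U + \sum_(i < n) D i * M i i * D i.
  rewrite -{1}hL /U -!big_split /=; apply eq_bigr => i _.
  rewrite -!big_split /=.
  rewrite [RHS](_ : _ = \sum_(j < n) ((if (j < i)%N then D i * M i j * D j else 0) +
     (if (i < j)%N then D i * M i j * D j else 0) +
     (if j == i then D i * M i j * D j else 0))).
    apply eq_bigr => j _.
    have -> : (j == i) = (nat_of_ord j == nat_of_ord i) by [].
    by case: ltngtP => h /=; rewrite ?addr0 ?add0r.
  have hd : \sum_(j < n) (if j == i then D i * M i j * D j else 0) = D i * M i i * D i.
    by rewrite -big_mkcond big_pred1_eq.
  by rewrite !big_split /= hd.
rewrite hI /Kdot -addrA.
apply: dvdzD'; first by apply/dvdzP; exists U; ring.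
rewrite -big_split /=.
apply: (big_ind (fun x => (2 %| x)%Z)) => //.
  by move=> a b ha hb; apply: dvdzD'.
move=> i _; rewrite /KE.
have -> : D i * M i i * D i + D i * (2 * (g i)%:Z - 2 - M i i) =
   M i i * (D i * (D i - 1)) + 2 * (D i * ((g i)%:Z - 1)) by ring.
apply: dvdzD'; first by apply: dvdz_mull; apply: even_mm1.
by apply/dvdzP; exists (D i * ((g i)%:Z - 1)); ring.
Qed.

End H.
Lemma int_case (d a X kap : int) : (d = 2 \/ d = 3) -> 1 <= a -> ~~ (d %| a)%Z ->
  d * d * X <= - (a * a * d) - 1 -> 1 <= kap ->
  exists m, 1 <= m /\ X + a * kap <= - (d * m * m) + m * (d * kap).
Proof.
move=> hd ha hna hX hk.
have hd0 : d != 0 by case: hd => ->.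
have hdp : 0 < d by case: hd => ->.
have ea := divz_eq a d.
have r0 := modz_ge0 a hd0; have r1 := ltz_pmod a hdp.
have rn : (a %% d)%Z != 0 by apply: contra hna => /eqP h; apply/dvdz_mod0P.
move: ea r0 r1 rn hX; set q := (a %/ d)%Z; set r := (a %% d)%Z => ea r0 r1 rn hX.
have hq : 0 <= q by nia.
rewrite ea in hX *.
have [hkq|hkq] := lerP kap (2 * q).
  exists q; split; first by lia.
  case: hd => hd; subst d; nia.
exists (q + 1); split; first by lia.
case: hd => hd; subst d; nia.
Qed.

Lemma max_m (d t f m : int) : 0 < d -> f * d <= t -> t < (f + 1) * d -> 1 <= m ->
  m * (2 * t + d) - d * m * m <= (f + 1) * (2 * t + d) - d * (f + 1) * (f + 1).
Proof.
move=> hd h1 h2 hm.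
rewrite -subr_ge0.
have -> : (f + 1) * (2 * t + d) - d * (f + 1) * (f + 1) - (m * (2 * t + d) - d * m * m)
   = (f + 1 - m) * (2 * t - d * f - d * m) by ring.
have [hmf|hmf] := lerP m f.
  apply: mulr_ge0; nia.
have [->|hne] := eqVneq m (f + 1); first by rewrite subrr mul0r.
apply: mulr_le0; nia.
Qed.

Theorem lemma3p12 (n : nat) (M : 'M[int]_n) (g : 'I_n -> nat) (Z : cyc n) (d : nat) :
  resolution_data M g ->
  fundamental_cycle M Z ->
  (d = 2%N \/ d = 3%N) ->
  inter M Z Z = - (d%:Z) ->
  0 < pa M g Z ->
  essentially_irreducible M g Z ->
  Z_is_Zmin M g Z ->
  let p := pa M g Z in
  let f : int := Num.floor ((p - 1) / d%:R) in
  is_sing_pa M g (pa M g (scale_cyc (f + 1) Z)) /\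
  pa M g (scale_cyc (f + 1) Z)
    = d%:R / 2 * ((2 * p - 2) / d%:R - f%:~R) * (f%:~R + 1) + 1.
Proof.
move=> [n0 [Ms Moff Mneg Mconn Mnom]] [[Zpos Znef] Zleast] hd hZZ hp [a0 [hna hst]] hmin p f.
have Msym : forall i j, M i j = M j i by move=> i j; rewrite -{1}Ms mxE.
have m2 : forall j, j != a0 -> minus2_curve M g j.
  move=> j hj; case: hst => [hZ | hall].
    by have := Zpos j; rewrite hZ /scale_cyc !ffunE (negbTE hj) mulr0 ltxx.
  by apply: hall; rewrite ffunE (negbTE hj) mulr0 subr0; apply: lt0r_neq0.
have KE0 : forall j, j != a0 -> KE M g j = 0.
  by move=> j /m2 [h1 h2]; rewrite /KE h1 h2.
have KD : forall D : cyc n, Kdot M g D = D a0 * KE M g a0.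
  move=> D; rewrite /Kdot (bigD1 a0) //= big1 ?addr0 // => j hj.
  by rewrite KE0 ?mulr0.
have nb : forall j, j != a0 -> exists b, b != j /\ 0 < M b j.
  move=> j hj; case/connectP: (Mconn j a0) => [[|b s]] /=; first by move=> _ e; rewrite e eqxx in hj.
  case/andP => /andP [hjb hM] _ _; exists b; split; first by rewrite eq_sym.
  by rewrite Msym.
have ZE0 : forall j, j != a0 -> inter M Z (ecyc j) = 0.
  move=> j hj; have [hg hM] := m2 j hj.
  have hle := Znef j.
  pose Y : cyc n := [ffun i => 1 * Z i + (-1) * ecyc j i].
  have YE : forall i, Y i = Z i - (i == j)%:Z by move=> i; rewrite !ffunE; ring.
  have hge : -1 <= inter M Z (ecyc j).
    rewrite leNgt; apply/negP => hlt.
    have hZj : 2 <= Z j.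
      rewrite leNgt; apply/negP => hZj.
      have hZ1 : Z j = 1 by have := Zpos j; lia.
      move: hlt; rewrite inter_ecycr (bigD1 j) //= hZ1 hM.
      have [b [hbj hb]] := nb j hj.
      rewrite (bigD1 b) //=.
      have : 0 <= \sum_(i < n | (i != j) && (i != b)) Z i * M i j.
        apply: sumr_ge0 => i /andP [hij _]; apply: mulr_ge0; first exact: ltW (Zpos i).
        exact: Moff.
      move=> hS; have := Zpos b => hZb; have h1 : 1 <= Z b * M b j by move: hZb hb; clear; nia.
      move: (Z b * M b j) (\sum_(i < n | (i != j) && (i != b)) Z i * M i j) h1 hS => P S h1 hS.
      lia.
    have gY : (forall i, 0 < Y i) /\ (forall i, inter M Y (ecyc i) <= 0).
      split=> i; first by rewrite YE; case: eqP => [->|_]; have := Zpos i; lia.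
      rewrite inter_linl inter_ee.
      case: (eqVneq i j) => [->|hij]; first by rewrite hM; lia.
      have := Moff j i; rewrite eq_sym => /(_ hij); have := Znef i; lia.
    have := Zleast Y gY j; rewrite YE eqxx; lia.
  have hne : inter M Z (ecyc j) != -1.
    apply/negP => /eqP he.
    have hY : Y = Z.
      apply: hmin.
      - split.
          by move=> i; rewrite YE ffunE; case: eqP => _; have := Zpos i; lia.
        move=> Y0; have := Zpos a0; have := YE a0; rewrite Y0 ffunE eq_sym (negbTE hj); lia.
      - by move=> i; rewrite YE; case: eqP => _; lia.
      - rewrite /pa inter_quad // Kdot_lin Kdot_e KE0 // inter_ee hM he; congr (_ + (_)%:~R / _); ring.
    by have := YE j; rewrite hY eqxx; lia.
  lia.
set k := Z a0; set zA := inter M Z (ecyc a0); set kap := KE M g a0.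
have ZD : forall D : cyc n, inter M Z D = D a0 * zA.
  move=> D; rewrite inter_expand (bigD1 a0) //= big1 ?addr0 // => j hj.
  by rewrite ZE0 ?mulr0.
have DZ : forall D : cyc n, inter M D Z = D a0 * zA.
  by move=> D; rewrite inter_sym // ZD.
have kz : k * zA = - d%:Z by rewrite -hZZ ZD.
have zA0 : zA <= 0 := Znef a0.
have k0 : 0 < k := Zpos a0.
have [t ht] : exists t, - d%:Z + k * kap = t * 2.
  by apply/dvdzP; rewrite -hZZ -[k * kap]KD; apply: parity.
have pE : p = 1 + t%:~R.
  by rewrite /p /pa hZZ KD -/k -/kap ht rmorphM /=; field.
have t0 : 0 <= t.
  by move: hp; rewrite -/p pE -(rmorph1 (intr : int -> rat)) -rmorphD ltr0z; lia.
have kap1 : 1 <= kap by case: hd => hd; rewrite hd in ht; nia.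
have hdp : (0 < d%:Z) by case: hd => ->.
have main : forall D : cyc n, cyc_pos D -> exists m : int,
    1 <= m /\ inter M D D + D a0 * kap <= - (d%:Z * m * m) + m * (k * kap).
  move=> D [D0 Dn0].
  have ha : 0 <= D a0 by have := D0 a0; rewrite ffunE.
  move: ha; set a := D a0 => ha.
  pose C : cyc n := [ffun i => k * D i + (- a) * Z i].
  have hCC : inter M C C = k * k * inter M D D + a * a * d%:Z.
    rewrite inter_quad // DZ -/a hZZ.
    have -> : 2 * k * - a * (a * zA) = 2 * a * a * - (k * zA) by ring.
    rewrite kz; ring.
  have CC0 : inter M C C <= 0.
    have [C0|Cn0] := eqVneq C 0.
      rewrite C0 /inter big1 // => i _; rewrite big1 // => j _; rewrite ffunE; ring.
    exact/ltW/Mneg/eqP.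
  have [/dvdzP [q hq]|hnd] := boolP (k %| a)%Z.
    have q0 : 0 <= q by nia.
    have hDD : inter M D D <= - (q * q * d%:Z).
      have : k * k * (inter M D D + q * q * d%:Z) <= 0.
        have -> : k * k * (inter M D D + q * q * d%:Z) = k * k * inter M D D + a * a * d%:Z.
          by rewrite hq; ring.
        by rewrite -hCC.
      by rewrite pmulr_rle0 ?mulr_gt0 //; lia.
    have [q00|qpos] := eqVneq q 0.
      exists 1; split => //; rewrite -/a hq q00 mul0r mul0r; move: hDD; rewrite q00; nia.
    exists q; split; first by lia.
    rewrite -/a hq; nia.
  have k0' : k != 0 by apply: lt0r_neq0.
  have Cn0 : C != 0.
    apply/eqP => C0.
    have hC : forall i, k * D i = a * Z i.
      move=> i; have := congr1 (fun F : cyc n => F i) C0; rewrite /= !ffunE; lia.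
    have hCe : forall i, k * inter M D (ecyc i) = a * inter M Z (ecyc i).
      move=> i; have := congr1 (fun F : cyc n => inter M F (ecyc i)) C0.
      have -> : inter M 0 (ecyc i) = 0.
        by rewrite /inter big1 // => l _; rewrite big1 // => j _; rewrite ffunE; ring.
      rewrite /= inter_linl; lia.
    have ea := divz_eq a k.
    have r0 := modz_ge0 a k0'; have r1 := ltz_pmod a k0.
    have rn : (a %% k)%Z != 0 by apply: contra hnd => /eqP h; apply/dvdz_mod0P.
    move: ea r0 r1 rn; set q := (a %/ k)%Z; set r := (a %% k)%Z => ea r0 r1 rn.
    pose Y : cyc n := [ffun i => 1 * D i + (- q) * Z i].
    have hY : forall i, k * Y i = r * Z i.
      by move=> i; rewrite ffunE; have := hC i; rewrite ea; lia.
    have gY : (forall i, 0 < Y i) /\ (forall i, inter M Y (ecyc i) <= 0).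
      split=> i.
        have := hY i; have := Zpos i; nia.
      have := hCe i; have := Znef i; rewrite inter_linl ea; nia.
    have := Zleast Y gY a0; have := hY a0; rewrite -/k; nia.
  have CC1 : inter M C C <= -1.
    by have := Mneg C (elimN eqP Cn0); lia.
  have k1 : k != 1 by apply: contra hnd => /eqP ->; apply: dvd1z.
  have kge : 2 <= k by lia.
  have z1 : 1 <= - zA by nia.
  have kd : k = d%:Z /\ zA = -1.
    case: hd => hd; rewrite hd in kz *; split; nia.
  case: kd => kd zA1.
  have a1 : 1 <= a.
    have an0 : a != 0 by apply: contra hnd => /eqP ->; apply: dvdz0.
    lia.
  have := @int_case d%:Z a (inter M D D) kap.
  case.
  - by case: hd => ->; [left|right].
  - exact: a1.
  - by rewrite -kd.
  - by move: CC1; rewrite hCC kd; lia.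
  - exact: kap1.
  by move=> m [hm1 hm]; exists m; split => //; rewrite kd.
have kk : k * kap = t * 2 + d%:Z by lia.
have paS : forall m : int, pa M g (scale_cyc m Z) =
    1 + (- (d%:Z * m * m) + m * (k * kap))%:~R / 2.
  move=> m.
  have -> : scale_cyc m Z = [ffun i => m * Z i + 0 * Z i].
    by apply/ffunP => i; rewrite !ffunE mul0r addr0.
  rewrite /pa inter_quad // KD ffunE hZZ -/k -/kap; congr (_ + (_)%:~R / _); ring.
have dR : (d%:R : rat) = (d%:Z)%:~R by [].
have hdR : (0 : rat) < d%:R by rewrite dR ltr0z.
have fE : f = Num.floor (t%:~R / d%:R : rat) by rewrite /f pE addrC addKr.
have hf1 : f * d%:Z <= t.
  have := floor_le (t%:~R / d%:R : rat); rewrite -fE ler_pdivlMr // dR -rmorphM ler_int.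
  done.
have hf2 : t < (f + 1) * d%:Z.
  have := floorD1_gt (t%:~R / d%:R : rat); rewrite -fE ltr_pdivrMr // dR -rmorphM ltr_int.
  done.
have f0 : 0 <= f by nia.
split; last first.
  rewrite paS kk pE dR.
  rewrite !(rmorphD, rmorphM, rmorphN, rmorph1) /=.
  by field; rewrite gt_eqF.
split.
  exists (scale_cyc (f + 1) Z); split => //; split.
    by move=> i; rewrite !ffunE; have := Zpos i; nia.
  move=> h0; have := congr1 (fun F : cyc n => F a0) h0; rewrite /= !ffunE.
  by apply/eqP; rewrite -/k; nia.
move=> D hD; have [m [hm1 hm]] := main D hD.
rewrite paS /pa KD.
have h3 : (inter M D D + D a0 * kap)%:~R <= (- (d%:Z * m * m) + m * (k * kap))%:~R :> rat.
  by rewrite ler_int.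
have h4 : (- (d%:Z * m * m) + m * (k * kap))%:~R <=
    (- (d%:Z * (f + 1) * (f + 1)) + (f + 1) * (k * kap))%:~R :> rat.
  rewrite ler_int kk; move: (max_m _ _ _ _ hdp hf1 hf2 hm1); lia.
lra.
Qed.
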